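(* Let $\pi_0:Z_0\to Z$ be the minimal resolution of a canonical surface singularity, with exceptional curves $E_1,\dots,E_r$ generating $\mathbf{E}_0\subseteq\operatorname{Pic}Z_0$ and numerical cycle $Z_{\mathrm{num}}$. Let $g:\mathbf{E}_0\to\mathbb{Q}$ be of the form $g(E)=-E^2+\ell(E)$ with $\ell$ linear and $\ell(E_i)\le0$ for all $i$. Then $g(E)>0$ for all nonzero effective $E\in\mathbf{E}_0$ if and only if $g(Z_{\mathrm{num}})>0$.
   Context: The numerical cycle $Z_{\mathrm{num}}$ is the minimal nonzero effective $\pi_0$-exceptional divisor $F$ with $F\cdot E_i\le0$ for all $i$. *)

(* Defs.v *)
From HB Require Import structures.
From mathcomp Require Import all_boot all_order all_algebra.
Set Implicit Arguments. Unset Strict Implicit. Unset Printing Implicit Defensive.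
Import Order.TTheory GRing.Theory Num.Theory.
Local Open Scope ring_scope.

(* The lattice E_0 generated by the exceptional curves E_1..E_r is modelled by
   coefficient vectors 'I_r -> int (E = \sum_i a_i E_i); M i j = E_i . E_j is the
   intersection matrix. *)

Definition iform (r : nat) (M : 'M[int]_r) (a b : 'I_r -> int) : int :=
  \sum_(i < r) \sum_(j < r) a i * M i j * b j.

Definition ecurve (r : nat) (i : 'I_r) : 'I_r -> int := fun j => (i == j)%:R.

Definition effective (r : nat) (a : 'I_r -> int) : Prop := forall i, 0 <= a i.
Definition nonzero (r : nat) (a : 'I_r -> int) : Prop := exists i, a i != 0.

(* Intersection lattice of the minimal resolution of a canonical surface
   singularity: a connected configuration of (-2)-curves meeting
   non-negatively, with negative definite intersection form. *)
Definition canonical_config (r : nat) (M : 'M[int]_r) : Prop :=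
  (0 < r)%N /\
  (forall i j, M i j = M j i) /\
  (forall i, M i i = -2) /\
  (forall i j, i != j -> 0 <= M i j) /\
  (forall a : 'I_r -> int, nonzero a -> iform M a a < 0) /\
  (forall i j, connect (fun x y : 'I_r => M x y != 0) i j).

Definition antinef (r : nat) (M : 'M[int]_r) (F : 'I_r -> int) : Prop :=
  forall i, iform M F (ecurve i) <= 0.

Definition numerical_cycle (r : nat) (M : 'M[int]_r) (Z : 'I_r -> int) : Prop :=
  [/\ effective Z, nonzero Z, antinef M Z
    & forall F : 'I_r -> int, effective F -> nonzero F -> antinef M F ->
        (forall i, F i <= Z i) -> forall i, F i = Z i].

Definition gfun (r : nat) (M : 'M[int]_r) (lv : 'I_r -> rat) (E : 'I_r -> int) : rat :=
  - (iform M E E)%:~R + \sum_(i < r) (E i)%:~R * lv i.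

(* Main.v *)
Require Import Defs.
From HB Require Import structures.
From mathcomp Require Import all_boot all_order all_algebra.
From mathcomp Require Import zify ring lra.
Import Order.TTheory GRing.Theory Num.Theory.
Set Implicit Arguments. Unset Strict Implicit. Unset Printing Implicit Defensive.
Local Open Scope ring_scope.

Definition col (r : nat) (M : 'M[int]_r) (a : 'I_r -> int) (j : 'I_r) : int :=
  \sum_(i < r) a i * M i j.

Lemma iform_col r (M : 'M[int]_r) a b : iform M a b = \sum_j col M a j * b j.
Proof. rewrite /iform exchange_big /=; apply eq_bigr => j _; by rewrite /col mulr_suml. Qed.

Lemma col_e r (M : 'M[int]_r) a j : iform M a (ecurve j) = col M a j.
Proof.
rewrite iform_col (bigD1 j) //= /ecurve eqxx mulr1 big1 ?addr0 // => k nkj.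
by rewrite eq_sym (negbTE nkj) mulr0.
Qed.

Lemma col_ee r (M : 'M[int]_r) k j : col M (ecurve k) j = M k j.
Proof.
rewrite /col (bigD1 k) //= /ecurve eqxx mul1r big1 ?addr0 // => i nik.
by rewrite eq_sym (negbTE nik) mul0r.
Qed.

Lemma colD r (M : 'M[int]_r) a b c j : (forall k, c k = a k + b k) ->
  col M c j = col M a j + col M b j.
Proof. move=> H; rewrite /col -big_split; apply eq_bigr => k _; by rewrite H mulrDl. Qed.

Lemma iformDl r (M : 'M[int]_r) a b c d : (forall k, c k = a k + b k) ->
  iform M c d = iform M a d + iform M b d.
Proof.
move=> H; rewrite !iform_col -big_split; apply eq_bigr => k _.
by rewrite (colD _ _ H) mulrDl.
Qed.

Lemma iformC r (M : 'M[int]_r) a b : (forall i j, M i j = M j i) ->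
  iform M a b = iform M b a.
Proof.
move=> hs; rewrite /iform exchange_big /=; apply eq_bigr => i _; apply eq_bigr => j _.
rewrite (hs j i); ring.
Qed.

Lemma iform_exp r (M : 'M[int]_r) a b c : (forall i j, M i j = M j i) ->
  (forall k, c k = a k + b k) ->
  iform M c c = iform M a a + iform M a b + iform M a b + iform M b b.
Proof.
move=> hs H; rewrite (iformDl _ _ H) (iformC _ _ hs) (iformDl _ _ H).
rewrite (iformC b c hs) (iformDl _ _ H) (iformC b a hs); ring.
Qed.

Lemma col_ge0 r (M : 'M[int]_r) a i : (forall i j, i != j -> 0 <= M i j) ->
  effective a -> a i = 0 -> 0 <= col M a i.
Proof.
move=> ho he h0; apply: sumr_ge0 => k _.
case: (eqVneq k i) => [->|nki]; first by rewrite h0 mul0r.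
by apply: mulr_ge0; [exact: he | exact: ho].
Qed.

Lemma ecurve_case r (j k : 'I_r) : ecurve j k = if j == k then 1 else 0.
Proof. by rewrite /ecurve; case: eqP. Qed.

Lemma sum_e r (j : 'I_r) : \sum_k ecurve j k = 1.
Proof.
rewrite (bigD1 j) //= /ecurve eqxx big1 ?addr0 // => k nkj.
by rewrite eq_sym (negbTE nkj).
Qed.

Lemma sum_ge_one r (a : 'I_r -> int) j : effective a -> a j <= \sum_k a k.
Proof.
move=> he; rewrite (bigD1 j) //= lerDl; apply: sumr_ge0 => k _; exact: he.
Qed.

Lemma laufer_dich r (M : 'M[int]_r) Z D :
  (forall i j, i != j -> 0 <= M i j) -> antinef M Z ->
  (forall i, D i <= Z i) ->
  (forall i, col M D i <= 0) \/ exists j, 0 < col M D j /\ D j < Z j.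
Proof.
move=> ho hZa Dle.
case: (boolP [forall i, col M D i <= 0]) => [/forallP Ha | /forallPn [j]].
  by left.
rewrite -ltNge => Hj; right; exists j; split => //.
have ZDe : effective (fun k => Z k - D k) by move=> k; rewrite subr_ge0.
rewrite lt_neqAle Dle andbT; apply/eqP => Heq.
have := colD M j (a := D) (b := fun k => Z k - D k) (c := Z) (fun k => esym (subrKC _ _)).
have := @col_ge0 _ M (fun k => Z k - D k) j ho ZDe.
rewrite /= Heq subrr => /(_ erefl).
have := hZa j; rewrite col_e; lia.
Qed.

Lemma laufer_aux r (M : 'M[int]_r) Z :
  (forall i j, M i j = M j i) -> (forall i, M i i = -2) ->
  (forall i j, i != j -> 0 <= M i j) -> effective Z -> antinef M Z ->
  (forall F : 'I_r -> int, effective F -> nonzero F -> antinef M F ->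
        (forall i, F i <= Z i) -> forall i, F i = Z i) ->
  forall n : nat, forall D, effective D -> nonzero D -> (forall i, D i <= Z i) ->
   \sum_i (Z i - D i) <= n%:Z -> iform M D D <= iform M Z Z.
Proof.
move=> hs hd ho hZe hZa hmin n; elim: n => [|n IH] D De Dn Dle Ds;
  (case: (laufer_dich ho hZa Dle) => [Ha | [j [Hj DjZ]]];
  [ have HDZ : forall i, D i = Z i;
    [ apply: hmin => // i; rewrite col_e; exact: Ha
    | rewrite [X in X <= _](_ : iform M D D = iform M Z Z) ?lexx //;
       rewrite /iform; apply: eq_bigr => i _; apply: eq_bigr => k _; rewrite !HDZ //]
  | ]).
- have ZDe : effective (fun k => Z k - D k) by move=> k; rewrite subr_ge0.
  have := le_trans (sum_ge_one j ZDe) Ds.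
  by rewrite /= subr_le0 leNgt DjZ.
- set D' := fun k => D k + ecurve j k.
  have hexp := @iform_exp _ M D (ecurve j) D' hs (fun k => erefl).
  rewrite col_e col_e col_ee hd in hexp.
  have : iform M D' D' <= iform M Z Z.
    apply: IH.
    + move=> k; rewrite /D' ecurve_case; have := De k; case: (j == k); lia.
    + exists j; rewrite /D' ecurve_case eqxx; have := De j; lia.
    + move=> k; rewrite /D' ecurve_case; case: eqP => [<-|_]; have := Dle k; lia.
    + have -> : \sum_i (Z i - D' i) = \sum_i (Z i - D i) - \sum_i ecurve j i.
        by rewrite -sumrB; apply: eq_bigr => i _; rewrite /D'; ring.
      rewrite sum_e; lia.
  rewrite hexp; lia.
Qed.

Lemma laufer r (M : 'M[int]_r) Z :
  (forall i j, M i j = M j i) -> (forall i, M i i = -2) ->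
  (forall i j, i != j -> 0 <= M i j) -> effective Z -> antinef M Z ->
  (forall F : 'I_r -> int, effective F -> nonzero F -> antinef M F ->
        (forall i, F i <= Z i) -> forall i, F i = Z i) ->
  forall D, effective D -> nonzero D -> (forall i, D i <= Z i) ->
   iform M D D <= iform M Z Z.
Proof.
move=> hs hd ho hZe hZa hmin D De Dn Dle.
apply: (laufer_aux hs hd ho hZe hZa hmin (n := absz (\sum_i (Z i - D i))) De Dn Dle).
by rewrite abszE ler_norm.
Qed.

Lemma Zpos r (M : 'M[int]_r) Z :
  (forall i j, i != j -> 0 <= M i j) ->
  (forall i j, connect (fun x y : 'I_r => M x y != 0) i j) ->
  effective Z -> nonzero Z -> antinef M Z -> forall i, 0 < Z i.
Proof.
move=> ho hc hZe [k Hk] hZa i.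
have Zk : 0 < Z k by rewrite lt0r Hk hZe.
have step : forall x y, M x y != 0 -> 0 < Z x -> 0 < Z y.
  move=> x y Hxy Hx; rewrite lt0r hZe andbT; apply/eqP => Hy0.
  have nxy : x != y by apply/eqP => exy; move: Hx; rewrite exy Hy0 ltxx.
  have := hZa y; rewrite col_e.
  have : 0 < col M Z y.
    rewrite /col (bigD1 x) //=.
    have h1 : 0 < Z x * M x y by apply: mulr_gt0 => //; rewrite lt0r Hxy ho.
    have h2 : 0 <= \sum_(k | k != x) Z k * M k y.
      apply: sumr_ge0 => l _; case: (eqVneq l y) => [->|nly]; first by rewrite Hy0 mul0r.
      by apply: mulr_ge0; [exact: hZe | exact: ho].
    apply: (lt_le_trans h1); by rewrite lerDl.
  move=> h3 h4; move: (lt_le_trans h3 h4); by rewrite ltxx.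
move: (hc k i) => /connectP [p Hp ->].
elim: p k Zk Hp {Hk} => [|y p IHp] k Zk /= Hp //.
move/andP: Hp => [Hky Hp]; exact: IHp y (step _ _ Hky Zk) Hp.
Qed.

Lemma gle r (M : 'M[int]_r) (lv : 'I_r -> rat) Z :
  (forall i j, M i j = M j i) -> (forall i, M i i = -2) ->
  (forall i j, i != j -> 0 <= M i j) -> effective Z -> antinef M Z ->
  (forall F : 'I_r -> int, effective F -> nonzero F -> antinef M F ->
        (forall i, F i <= Z i) -> forall i, F i = Z i) ->
  (forall i, lv i <= 0) -> 0 < gfun M lv Z ->
  forall E, effective E -> nonzero E -> (forall i, E i <= Z i) -> 0 < gfun M lv E.
Proof.
move=> hs hd ho hZe hZa hmin hlv hgZ E Ee En Ele.
have hQ := laufer hs hd ho hZe hZa hmin Ee En Ele.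
have hl : \sum_i (Z i)%:~R * lv i <= \sum_i (E i)%:~R * lv i.
  apply: ler_sum => i _; apply: ler_wnM2r => //; by rewrite ler_int.
have hQ' : (iform M E E)%:~R <= (iform M Z Z)%:~R :> rat by rewrite ler_int.
move: hgZ; rewrite /gfun; lra.
Qed.

Lemma gmain r (M : 'M[int]_r) (lv : 'I_r -> rat) Z :
  (forall i j, M i j = M j i) -> (forall i, M i i = -2) ->
  (forall i j, i != j -> 0 <= M i j) ->
  (forall i j, connect (fun x y : 'I_r => M x y != 0) i j) ->
  effective Z -> nonzero Z -> antinef M Z ->
  (forall F : 'I_r -> int, effective F -> nonzero F -> antinef M F ->
        (forall i, F i <= Z i) -> forall i, F i = Z i) ->
  (forall i, lv i <= 0) -> 0 < gfun M lv Z ->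
  forall n : nat, forall E, effective E -> nonzero E -> \sum_i E i <= n%:Z ->
  0 < gfun M lv E.
Proof.
move=> hs hd ho hc hZe hZn hZa hmin hlv hgZ n.
elim: n => [|n IH] E Ee En Es.
  case: En => i Ei; have h : 0 < E i by rewrite lt0r Ei Ee.
  by have := lt_le_trans (lt_le_trans h (sum_ge_one i Ee)) Es; rewrite ltxx.
case: (boolP [forall i, E i <= Z i]) => [/forallP Hle | /forallPn [j Hj]].
  exact: (gle hs hd ho hZe hZa hmin hlv hgZ Ee En Hle).
rewrite -ltNge in Hj.
set D := fun i => if E i <= Z i then E i else Z i.
set R := fun i => E i - D i.
have hZp := Zpos ho hc hZe hZn hZa.
have De : effective D by move=> i; rewrite /D; case: ifP => _; [exact: Ee | exact: hZe].
have Dle : forall i, D i <= Z i.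
  by move=> i; rewrite /D; case: ifP => // /negbT; rewrite -ltNge => /ltW.
have Re : effective R.
  move=> i; rewrite /R /D; case: ifP => [_|/negbT]; first by rewrite subrr.
  by rewrite -ltNge => /ltW; rewrite subr_ge0.
have DR : forall i, E i = D i + R i by move=> i; rewrite /R subrKC.
have [i0 Ei0] := En.
have Di0 : 0 < D i0 by rewrite /D; case: ifP => _; [rewrite lt0r Ei0 Ee | exact: hZp].
have Dn : nonzero D by exists i0; move: Di0; rewrite lt0r => /andP[].
have Rn : nonzero R.
  exists j; rewrite /R /D.
  have -> : (E j <= Z j) = false by rewrite leNgt Hj.
  by rewrite subr_eq0 (gt_eqF Hj).
have Rs : \sum_i R i <= n%:Z.
  have hsum : \sum_i E i = \sum_i D i + \sum_i R i.
    by rewrite -big_split; apply eq_bigr => i _; exact: DR.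
  have := sum_ge_one i0 De; lia.
have hDR : iform M D R <= 0.
  rewrite iform_col; apply: sumr_le0 => i _.
  case: (boolP (E i <= Z i)) => h.
    have -> : R i = 0 by rewrite /R /D h subrr.
    by rewrite mulr0.
  have HDi : D i = Z i by rewrite /D (negbTE h).
  have hRi : 0 <= R i by exact: Re.
  apply: mulr_le0_ge0 => //.
  have ZDe : effective (fun k => Z k - D k) by move=> k; rewrite subr_ge0.
  have := @col_ge0 _ M (fun k => Z k - D k) i ho ZDe.
  rewrite /= HDi subrr => /(_ erefl).
  have := colD M i (a := D) (b := fun k => Z k - D k) (c := Z) (fun k => esym (subrKC _ _)).
  have := hZa i; rewrite col_e; lia.
have hexp := @iform_exp _ M D R E hs DR.
have hlin : \sum_i (E i)%:~R * lv i = \sum_i (D i)%:~R * lv i + \sum_i (R i)%:~R * lv i.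
  by rewrite -big_split; apply eq_bigr => i _; rewrite DR intrD mulrDl.
have gD := gle hs hd ho hZe hZa hmin hlv hgZ De Dn Dle.
have gR := IH R Re Rn Rs.
have hDR' : (iform M D R)%:~R <= 0 :> rat by rewrite lerz0.
move: gD gR; rewrite /gfun hexp hlin !intrD; lra.
Qed.

Theorem mainTheorem12 (r : nat) (M : 'M[int]_r) (lv : 'I_r -> rat)
    (Znum : 'I_r -> int) :
  canonical_config M ->
  (forall i, lv i <= 0) ->
  numerical_cycle M Znum ->
  ((forall E : 'I_r -> int, effective E -> nonzero E -> 0 < gfun M lv E)
   <-> 0 < gfun M lv Znum).
Proof.
move=> [_ [hs [hd [ho [_ hc]]]]] hlv [hZe hZn hZa hmin]; split.
  by move=> H; apply: H.
move=> hgZ E Ee En.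
apply: (gmain hs hd ho hc hZe hZn hZa hmin hlv hgZ (n := absz (\sum_i E i)) Ee En).
by rewrite abszE ler_norm.
Qed.
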